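(* Let $X,Y$ be real Banach spaces such that $X^*$ and $Y$ have octahedral norm. Let $H$ be a closed subspace of $L(X,Y)$ such that $X^*\otimes Y\subseteq H$. Then $H$ has octahedral norm.
   Context: The norm of a Banach space $Z$ is octahedral if for every finite-dimensional subspace $E$ of $Z$ and every $\varepsilon>0$ there is $y\in S_Z$ with $\|x+\lambda y\|\ge(1-\varepsilon)(\|x\|+|\lambda|)$ for all $x\in E$ and scalars $\lambda$. $L(X,Y)$ is the space of bounded linear operators with operator norm; $X^*\otimes Y$ is the space of finite-rank operators spanned by $x\mapsto x^*(x)y$. *)

(* Defs.v *)
From Stdlib Require Import Reals List Classical ClassicalEpsilon.
Open Scope R_scope.

Record Banach := {
  bcar :> Type;
  bzero : bcar;
  badd : bcar -> bcar -> bcar;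
  bopp : bcar -> bcar;
  bscal : R -> bcar -> bcar;
  bnorm : bcar -> R;
  badd_assoc : forall x y z, badd x (badd y z) = badd (badd x y) z;
  badd_comm : forall x y, badd x y = badd y x;
  badd_0 : forall x, badd x bzero = x;
  badd_opp : forall x, badd x (bopp x) = bzero;
  bscal_addr : forall a x y, bscal a (badd x y) = badd (bscal a x) (bscal a y);
  bscal_addl : forall a b x, bscal (a + b) x = badd (bscal a x) (bscal b x);
  bscal_mul : forall a b x, bscal a (bscal b x) = bscal (a * b) x;
  bscal_1 : forall x, bscal 1 x = x;
  bnorm_eq0 : forall x, bnorm x = 0 -> x = bzero;
  bnorm_triangle : forall x y, bnorm (badd x y) <= bnorm x + bnorm y;
  bnorm_scal : forall a x, bnorm (bscal a x) = Rabs a * bnorm x;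
  bcomplete : forall u : nat -> bcar,
    (forall eps, 0 < eps -> exists N, forall n m, (n >= N)%nat -> (m >= N)%nat ->
        bnorm (badd (u n) (bopp (u m))) < eps) ->
    exists l, Un_cv (fun n => bnorm (badd (u n) (bopp l))) 0
}.

(** Supremum of a set of reals (meaningful when it exists). *)
Definition Rsup (E : R -> Prop) : R := epsilon (inhabits 0) (is_lub E).

Definition is_blfun (X : Banach) (f : X -> R) : Prop :=
  (forall x y, f (badd X x y) = f x + f y) /\
  (forall a x, f (bscal X a x) = a * f x) /\
  (exists M, forall x, Rabs (f x) <= M * bnorm X x).

Definition is_blop (X Y : Banach) (T : X -> Y) : Prop :=
  (forall x y, T (badd X x y) = badd Y (T x) (T y)) /\
  (forall a x, T (bscal X a x) = bscal Y a (T x)) /\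
  (exists M, forall x, bnorm Y (T x) <= M * bnorm X x).

Definition dualnorm (X : Banach) (f : X -> R) : R :=
  Rsup (fun t => exists x, bnorm X x <= 1 /\ t = Rabs (f x)).

Definition opnorm (X Y : Banach) (T : X -> Y) : R :=
  Rsup (fun t => exists x, bnorm X x <= 1 /\ t = bnorm Y (T x)).

Fixpoint lincomb {V : Type} (zero : V) (add : V -> V -> V) (scal : R -> V -> V)
  (cs : list R) (es : list V) : V :=
  match cs, es with
  | c :: cs', e :: es' => add (scal c e) (lincomb zero add scal cs' es')
  | _, _ => zero
  end.

Definition in_span {V : Type} (zero : V) (add : V -> V -> V) (scal : R -> V -> V)
  (es : list V) (x : V) : Prop :=
  exists cs, length cs = length es /\ x = lincomb zero add scal cs es.

(** Octahedrality of the normed space Z = {v : V | P v} with the given operations: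
    every finite-dimensional subspace E (= span of finitely many elements of Z)
    and eps > 0 admit y in S_Z with ||x + lam y|| >= (1-eps)(||x|| + |lam|). *)
Definition octahedral_on {V : Type} (P : V -> Prop) (zero : V)
  (add : V -> V -> V) (scal : R -> V -> V) (nrm : V -> R) : Prop :=
  forall es : list V, Forall P es ->
  forall eps, 0 < eps ->
  exists y, P y /\ nrm y = 1 /\
    forall x lam, in_span zero add scal es x ->
      nrm (add x (scal lam y)) >= (1 - eps) * (nrm x + Rabs lam).

Definition octahedral (Z : Banach) : Prop :=
  octahedral_on (fun _ : Z => True) (bzero Z) (badd Z) (bscal Z) (bnorm Z).

Definition dual_octahedral (X : Banach) : Prop :=
  octahedral_on (is_blfun X) (fun _ => 0)
    (fun f g x => f x + g x) (fun a f x => a * f x) (dualnorm X).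

Definition op_zero (X Y : Banach) : X -> Y := fun _ => bzero Y.
Definition op_add (X Y : Banach) (S T : X -> Y) : X -> Y := fun x => badd Y (S x) (T x).
Definition op_scal (X Y : Banach) (a : R) (T : X -> Y) : X -> Y := fun x => bscal Y a (T x).
Definition op_opp (X Y : Banach) (T : X -> Y) : X -> Y := fun x => bopp Y (T x).

Definition closed_subspace_L (X Y : Banach) (H : (X -> Y) -> Prop) : Prop :=
  (forall T, H T -> is_blop X Y T) /\
  H (op_zero X Y) /\
  (forall S T, H S -> H T -> H (op_add X Y S T)) /\
  (forall a T, H T -> H (op_scal X Y a T)) /\
  (forall (Tn : nat -> X -> Y) (T : X -> Y),
     (forall n, H (Tn n)) -> is_blop X Y T ->
     Un_cv (fun n => opnorm X Y (op_add X Y (Tn n) (op_opp X Y T))) 0 -> H T).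

(** X^* (x) Y ⊆ H: every rank-one operator x |-> f(x) y lies in H
    (H being a subspace, this is equivalent to containing their span). *)
Definition contains_finite_rank (X Y : Banach) (H : (X -> Y) -> Prop) : Prop :=
  forall (f : X -> R) (y : Y), is_blfun X f -> H (fun x => bscal Y (f x) y).

Definition octahedral_opspace (X Y : Banach) (H : (X -> Y) -> Prop) : Prop :=
  octahedral_on H (op_zero X Y) (op_add X Y) (op_scal X Y) (opnorm X Y).

(* Main.v *)
Require Import Defs.
From Stdlib Require Import Reals List Classical ClassicalEpsilon FunctionalExtensionality PropExtensionality Lra Lia.
From mathcomp Require classical_sets boolp.
Open Scope R_scope.


Lemma b_cancel (B : Banach) (x y : B) : badd B x y = x -> y = bzero B.
Proof.
intro H. rewrite <- (badd_0 B y), <- (badd_opp B x), badd_assoc, (badd_comm B y x), H.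
reflexivity.
Qed.

Lemma b_scal0 (B : Banach) (x : B) : bscal B 0 x = bzero B.
Proof.
apply (b_cancel B (bscal B 0 x)). rewrite <- bscal_addl. f_equal; ring.
Qed.

Lemma b_scal_zero (B : Banach) a : bscal B a (bzero B) = bzero B.
Proof.
rewrite <- (b_scal0 B (bzero B)), bscal_mul. f_equal; ring.
Qed.

Lemma b_0add (B : Banach) (x : B) : badd B (bzero B) x = x.
Proof. rewrite badd_comm. apply badd_0. Qed.

Lemma b_subv (B : Banach) (x : B) : badd B x (bscal B (-1) x) = bzero B.
Proof.
rewrite <- (bscal_1 B x) at 1. rewrite <- bscal_addl. replace (1 + -1) with 0 by ring.
apply b_scal0.
Qed.

Lemma b_norm0 (B : Banach) : bnorm B (bzero B) = 0.
Proof.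
rewrite <- (b_scal0 B (bzero B)), bnorm_scal, Rabs_R0. ring.
Qed.

Lemma Rabs_m1 : Rabs (-1) = 1.
Proof. unfold Rabs; destruct Rcase_abs; lra. Qed.

Lemma b_norm_ge0 (B : Banach) (x : B) : 0 <= bnorm B x.
Proof.
assert (H := bnorm_triangle B x (bscal B (-1) x)).
rewrite b_subv, b_norm0, bnorm_scal in H.
replace (Rabs (-1)) with 1 in H by (rewrite Rabs_m1; reflexivity). lra.
Qed.

Lemma b_norm_opp (B : Banach) (x : B) : bnorm B (bscal B (-1) x) = bnorm B x.
Proof. rewrite bnorm_scal, Rabs_m1. ring. Qed.

Lemma b_add4 (B : Banach) (a b c d : B) :
  badd B (badd B a b) (badd B c d) = badd B (badd B a c) (badd B b d).
Proof.
rewrite <- !badd_assoc. f_equal. rewrite !badd_assoc. f_equal. apply badd_comm.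
Qed.

Lemma b_rev_tri (B : Banach) (x y : B) : bnorm B x - bnorm B y <= bnorm B (badd B x y).
Proof.
assert (H := bnorm_triangle B (badd B x y) (bscal B (-1) y)).
rewrite <- badd_assoc, b_subv, badd_0, b_norm_opp in H. lra.
Qed.

Lemma b_inv_scal (B : Banach) a (x y : B) : a <> 0 -> bscal B a x = y -> x = bscal B (/a) y.
Proof.
intros Ha H. rewrite <- H, bscal_mul. replace (/a * a) with 1 by (field; auto). rewrite bscal_1; auto.
Qed.

Lemma b_norm_eq0_iff (B : Banach) (x : B) : bnorm B x = 0 -> x = bzero B.
Proof. apply bnorm_eq0. Qed.

Definition ballset (X : Banach) (h : X -> R) : R -> Prop :=
  fun t => exists x, bnorm X x <= 1 /\ t = h x.

Definition bsbounded (X : Banach) (h : X -> R) : Prop :=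
  exists M, forall x, bnorm X x <= 1 -> h x <= M.

Lemma Rsup_lub (E : R -> Prop) : bound E -> (exists x, E x) -> is_lub E (Rsup E).
Proof.
intros Hb Hn. unfold Rsup. apply epsilon_spec.
destruct (completeness E Hb Hn) as [m Hm]. exists m; exact Hm.
Qed.

Lemma bs_lub X h : bsbounded X h -> is_lub (ballset X h) (Rsup (ballset X h)).
Proof.
intros [M HM]. apply Rsup_lub.
- exists M. intros t [x [Hx ->]]. auto.
- exists (h (bzero X)). exists (bzero X). rewrite b_norm0. split; [lra|auto].
Qed.

Lemma bs_ub X h x : bsbounded X h -> bnorm X x <= 1 -> h x <= Rsup (ballset X h).
Proof.
intros Hb Hx. destruct (bs_lub X h Hb) as [H _]. apply H. exists x; auto.
Qed.

Lemma bs_le X h M : (forall x, bnorm X x <= 1 -> h x <= M) -> Rsup (ballset X h) <= M.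
Proof.
intros HM. assert (Hb : bsbounded X h) by (exists M; auto).
destruct (bs_lub X h Hb) as [_ H]. apply H. intros t [x [Hx ->]]. auto.
Qed.

Lemma bs_approx X h eta : bsbounded X h -> 0 < eta ->
  exists x, bnorm X x <= 1 /\ Rsup (ballset X h) - eta < h x.
Proof.
intros Hb He. apply NNPP. intro Hn.
destruct (bs_lub X h Hb) as [_ H].
assert (Rsup (ballset X h) <= Rsup (ballset X h) - eta); [|lra].
apply H. intros t [x [Hx ->]]. apply Rnot_lt_le. intro Hlt. apply Hn. exists x; auto.
Qed.

Lemma bs_h0 X h : (forall a x, h (bscal X a x) = Rabs a * h x) -> h (bzero X) = 0.
Proof.
intro Hh. rewrite <- (b_scal0 X (bzero X)), Hh, Rabs_R0. ring.
Qed.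

Lemma bs_ge0 X h : bsbounded X h -> (forall a x, h (bscal X a x) = Rabs a * h x) ->
  0 <= Rsup (ballset X h).
Proof.
intros Hb Hh. rewrite <- (bs_h0 X h Hh). apply bs_ub; auto. rewrite b_norm0; lra.
Qed.

Lemma bs_scale X h x : bsbounded X h -> (forall a x, h (bscal X a x) = Rabs a * h x) ->
  h x <= Rsup (ballset X h) * bnorm X x.
Proof.
intros Hb Hh.
destruct (Req_dec (bnorm X x) 0) as [H0|H0].
- apply bnorm_eq0 in H0 as H1. rewrite H1, (bs_h0 X h Hh), b_norm0. lra.
- assert (Hp : 0 < bnorm X x) by (destruct (b_norm_ge0 X x); [auto| congruence]).
  assert (Hx : x = bscal X (bnorm X x) (bscal X (/ bnorm X x) x)).
  { rewrite bscal_mul. replace (bnorm X x * / bnorm X x) with 1 by (field; auto).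
    rewrite bscal_1; auto. }
  rewrite Hx at 1. rewrite Hh, Rabs_right by lra.
  assert (h (bscal X (/ bnorm X x) x) <= Rsup (ballset X h)).
  { apply bs_ub; auto. rewrite bnorm_scal, Rabs_right.
    - right; field; auto.
    - left; apply Rinv_0_lt_compat; auto. }
  nra.
Qed.

Lemma blfun_bounded X f : is_blfun X f -> bsbounded X (fun x => Rabs (f x)).
Proof.
intros [_ [_ [M HM]]]. exists (Rabs M). intros x Hx.
eapply Rle_trans; [apply HM|]. assert (H := b_norm_ge0 X x).
assert (M <= Rabs M) by apply Rle_abs. assert (0 <= Rabs M) by apply Rabs_pos. nra.
Qed.

Lemma blop_bounded X Y T : is_blop X Y T -> bsbounded X (fun x => bnorm Y (T x)).
Proof.
intros [_ [_ [M HM]]]. exists (Rabs M). intros x Hx.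
eapply Rle_trans; [apply HM|]. assert (H := b_norm_ge0 X x).
assert (M <= Rabs M) by apply Rle_abs. assert (0 <= Rabs M) by apply Rabs_pos. nra.
Qed.

Lemma blfun_hom X f : is_blfun X f -> forall a x, Rabs (f (bscal X a x)) = Rabs a * Rabs (f x).
Proof. intros [_ [Hs _]] a x. rewrite Hs, Rabs_mult. auto. Qed.

Lemma blop_hom X Y T : is_blop X Y T -> forall a x, bnorm Y (T (bscal X a x)) = Rabs a * bnorm Y (T x).
Proof. intros [_ [Hs _]] a x. rewrite Hs, bnorm_scal. auto. Qed.

Lemma dn_ub X f x : is_blfun X f -> bnorm X x <= 1 -> Rabs (f x) <= dualnorm X f.
Proof. intros Hf Hx. apply (bs_ub X (fun x => Rabs (f x))); auto. apply blfun_bounded; auto. Qed.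

Lemma dn_scale X f x : is_blfun X f -> Rabs (f x) <= dualnorm X f * bnorm X x.
Proof. intros Hf. apply (bs_scale X (fun x => Rabs (f x))). apply blfun_bounded; auto. apply blfun_hom; auto. Qed.

Lemma dn_le X f M : (forall x, bnorm X x <= 1 -> Rabs (f x) <= M) -> dualnorm X f <= M.
Proof. apply (bs_le X (fun x => Rabs (f x))). Qed.

Lemma dn_approx X f eta : is_blfun X f -> 0 < eta ->
  exists x, bnorm X x <= 1 /\ dualnorm X f - eta < Rabs (f x).
Proof. intros Hf He. apply (bs_approx X (fun x => Rabs (f x))); auto. apply blfun_bounded; auto. Qed.

Lemma op_ub X Y T x : is_blop X Y T -> bnorm X x <= 1 -> bnorm Y (T x) <= opnorm X Y T.
Proof. intros Hf Hx. apply (bs_ub X (fun x => bnorm Y (T x))); auto. apply blop_bounded; auto. Qed.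

Lemma op_scale X Y T x : is_blop X Y T -> bnorm Y (T x) <= opnorm X Y T * bnorm X x.
Proof. intros Hf. apply (bs_scale X (fun x => bnorm Y (T x))). apply blop_bounded; auto. apply blop_hom; auto. Qed.

Lemma op_le X Y T M : (forall x, bnorm X x <= 1 -> bnorm Y (T x) <= M) -> opnorm X Y T <= M.
Proof. apply (bs_le X (fun x => bnorm Y (T x))). Qed.

Lemma op_approx X Y T eta : is_blop X Y T -> 0 < eta ->
  exists x, bnorm X x <= 1 /\ opnorm X Y T - eta < bnorm Y (T x).
Proof. intros Hf He. apply (bs_approx X (fun x => bnorm Y (T x))); auto. apply blop_bounded; auto. Qed.

Lemma op_ge0 X Y T : is_blop X Y T -> 0 <= opnorm X Y T.
Proof. intros Hf. apply (bs_ge0 X (fun x => bnorm Y (T x))). apply blop_bounded; auto. apply blop_hom; auto. Qed.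

Lemma dn_ge0 X f : is_blfun X f -> 0 <= dualnorm X f.
Proof. intros Hf. apply (bs_ge0 X (fun x => Rabs (f x))). apply blfun_bounded; auto. apply blfun_hom; auto. Qed.

Lemma opnorm_ext X Y S T : (forall x, S x = T x) -> opnorm X Y S = opnorm X Y T.
Proof. intro H. f_equal. apply functional_extensionality; auto. Qed.

Lemma blop_add X Y S T : is_blop X Y S -> is_blop X Y T -> is_blop X Y (op_add X Y S T).
Proof.
intros [Sa [Ss [M HM]]] [Ta [Ts [N HN]]]. unfold op_add. split; [|split].
- intros x y. rewrite Sa, Ta. apply b_add4.
- intros a x. rewrite Ss, Ts, bscal_addr. auto.
- exists (M + N). intro x. eapply Rle_trans; [apply bnorm_triangle|].
  specialize (HM x); specialize (HN x). lra.
Qed.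

Lemma blop_scal X Y a T : is_blop X Y T -> is_blop X Y (op_scal X Y a T).
Proof.
intros [Ta [Ts [N HN]]]. unfold op_scal. split; [|split].
- intros x y. rewrite Ta, bscal_addr. auto.
- intros b x. rewrite Ts, !bscal_mul. f_equal; ring.
- exists (Rabs a * N). intro x. rewrite bnorm_scal. specialize (HN x).
  assert (0 <= Rabs a) by apply Rabs_pos. nra.
Qed.

Lemma blop_zero X Y : is_blop X Y (op_zero X Y).
Proof.
unfold op_zero. split; [|split].
- intros; rewrite badd_0; auto.
- intros; rewrite b_scal_zero; auto.
- exists 0. intros; rewrite b_norm0. lra.
Qed.

Lemma blop_lin0 X Y T : is_blop X Y T -> T (bzero X) = bzero Y.
Proof. intros [_ [Ts _]]. rewrite <- (b_scal0 X (bzero X)), Ts, b_scal0. auto. Qed.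

Lemma op_tri X Y S T : is_blop X Y S -> is_blop X Y T ->
  opnorm X Y (op_add X Y S T) <= opnorm X Y S + opnorm X Y T.
Proof.
intros HS HT. apply op_le. intros x Hx. unfold op_add.
eapply Rle_trans; [apply bnorm_triangle|].
assert (H1 := op_ub X Y S x HS Hx). assert (H2 := op_ub X Y T x HT Hx). lra.
Qed.

Lemma op_scal_le X Y a T : is_blop X Y T -> opnorm X Y (op_scal X Y a T) <= Rabs a * opnorm X Y T.
Proof.
intros HT. apply op_le. intros x Hx. unfold op_scal. rewrite bnorm_scal.
assert (H1 := op_ub X Y T x HT Hx). assert (0 <= Rabs a) by apply Rabs_pos. nra.
Qed.

Lemma op_scal_eq X Y a T : is_blop X Y T -> opnorm X Y (op_scal X Y a T) = Rabs a * opnorm X Y T.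
Proof.
intros HT. apply Rle_antisym; [apply op_scal_le; auto|].
destruct (Req_dec a 0) as [Ha|Ha].
- subst. rewrite Rabs_R0. assert (H := op_ge0 X Y _ (blop_scal X Y 0 T HT)). lra.
- assert (H := op_scal_le X Y (/a) (op_scal X Y a T) (blop_scal X Y a T HT)).
  rewrite (opnorm_ext X Y (op_scal X Y (/a) (op_scal X Y a T)) T) in H.
  + rewrite Rabs_inv in H. assert (0 < Rabs a) by (apply Rabs_pos_lt; auto).
    apply (Rmult_le_reg_l (/ Rabs a)). apply Rinv_0_lt_compat; auto.
    rewrite <- Rmult_assoc, Rinv_l, Rmult_1_l by lra. exact H.
  + intro x. unfold op_scal. rewrite bscal_mul. replace (/a * a) with 1 by (field; auto). apply bscal_1.
Qed.

Definition sublin (X : Banach) (p : X -> R) : Prop :=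
  (forall x y, p (badd X x y) <= p x + p y) /\ (forall a x, p (bscal X a x) = Rabs a * p x).

Definition goodL (X : Banach) (p : X -> R) (D : X -> Prop) (g : X -> R) : Prop :=
  D (bzero X) /\
  (forall x y, D x -> D y -> D (badd X x y)) /\
  (forall a x, D x -> D (bscal X a x)) /\
  (forall x y, D x -> D y -> g (badd X x y) = g x + g y) /\
  (forall a x, D x -> g (bscal X a x) = a * g x) /\
  (forall x, D x -> g x <= p x).

Definition extends (X : Banach) (D1 : X -> Prop) (g1 : X -> R) (D2 : X -> Prop) (g2 : X -> R) :=
  forall x, D1 x -> D2 x /\ g2 x = g1 x.

Lemma b_sub_eq0 (B : Banach) (x y : B) : badd B x (bscal B (-1) y) = bzero B -> x = y.
Proof.
intro H. rewrite <- (badd_0 B x), <- (b_subv B y), badd_assoc, (badd_comm B x y), <- badd_assoc, H.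
apply badd_0.
Qed.

Lemma b_neg_add (B : Banach) (z : B) : badd B (bscal B (-1) z) z = bzero B.
Proof. rewrite badd_comm. apply b_subv. Qed.

Lemma decomp_uniq (X : Banach) (D : X -> Prop) (p g : X -> R) (z d1 d2 : X) (t1 t2 : R) :
  goodL X p D g -> ~ D z -> D d1 -> D d2 ->
  badd X d1 (bscal X t1 z) = badd X d2 (bscal X t2 z) -> t1 = t2 /\ d1 = d2.
Proof.
intros [H0 [Ha [Hs _]]] Hz Hd1 Hd2 He.
set (w := badd X (bscal X (-1) d1) (bscal X (-t2) z)).
assert (E1 : badd X (badd X d1 (bscal X t1 z)) w = bscal X (t1 - t2) z).
{ unfold w. rewrite b_add4, b_subv, b_0add, <- bscal_addl. f_equal; ring. }
assert (E2 : badd X (badd X d2 (bscal X t2 z)) w = badd X d2 (bscal X (-1) d1)).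
{ unfold w. rewrite b_add4, <- (bscal_addl X t2), Rplus_opp_r, b_scal0, badd_0. reflexivity. }
rewrite He, E2 in E1.
destruct (Req_dec t1 t2) as [Ht|Ht].
- split; auto. subst t2. rewrite Rminus_diag, b_scal0 in E1.
  symmetry. apply b_sub_eq0. exact E1.
- exfalso. apply Hz.
  assert (z = bscal X (/(t1 - t2)) (badd X d2 (bscal X (-1) d1))).
  { apply b_inv_scal. lra. auto. }
  rewrite H. apply Hs. apply Ha; auto.
Qed.

Lemma goodL_g0 (X : Banach) p D g : goodL X p D g -> g (bzero X) = 0.
Proof.
intros [H0 [_ [_ [_ [Hgs _]]]]]. rewrite <- (b_scal0 X (bzero X)), Hgs by auto. ring.
Qed.

Lemma sublin_p0 (X : Banach) p : sublin X p -> p (bzero X) = 0.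
Proof. intros [_ Hs]. rewrite <- (b_scal0 X (bzero X)), Hs, Rabs_R0. ring. Qed.

Lemma extend_one (X : Banach) (p : X -> R) (D : X -> Prop) (g : X -> R) (z : X) (c : R) : sublin X p -> goodL X p D g -> ~ D z ->
  (forall d, D d -> g d - p (badd X d (bscal X (-1) z)) <= c) ->
  (forall d, D d -> c <= p (badd X d z) - g d) ->
  exists D' g', goodL X p D' g' /\ extends X D g D' g' /\ D' z /\ g' z = c.
Proof.
intros Hp HG Hz Hc1 Hc2.
pose (D' := fun x => exists d t, D d /\ x = badd X d (bscal X t z)).
pose (pick := fun x => epsilon (inhabits (bzero X, 0))
        (fun pr : X * R => D (fst pr) /\ x = badd X (fst pr) (bscal X (snd pr) z))).
pose (g' := fun x => g (fst (pick x)) + snd (pick x) * c).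
assert (Key : forall d t, D d -> g' (badd X d (bscal X t z)) = g d + t * c).
{ intros d t Hd. unfold g'.
  assert (Hs : D (fst (pick (badd X d (bscal X t z)))) /\
     badd X d (bscal X t z) = badd X (fst (pick (badd X d (bscal X t z))))
        (bscal X (snd (pick (badd X d (bscal X t z)))) z)).
  { unfold pick. apply epsilon_spec. exists (d, t). simpl; auto. }
  destruct Hs as [Hs1 Hs2].
  destruct (decomp_uniq X D p g z _ _ _ _ HG Hz Hs1 Hd (eq_sym Hs2)) as [-> ->]. auto. }
destruct HG as [H0 [Ha [Hs [Hga [Hgs Hgp]]]]].
assert (Hg0 : g (bzero X) = 0) by (apply (goodL_g0 X p D g); repeat split; auto).
destruct Hp as [Hpa Hps].
exists D', g'. split; [|split; [|split]].
- split; [|split; [|split; [|split; [|split]]]].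
  + exists (bzero X), 0. split; auto. rewrite b_scal0, badd_0; auto.
  + intros x y [d1 [t1 [Hd1 ->]]] [d2 [t2 [Hd2 ->]]]. exists (badd X d1 d2), (t1 + t2).
    split; auto. rewrite b_add4, bscal_addl. auto.
  + intros a x [d [t [Hd ->]]]. exists (bscal X a d), (a * t). split; auto.
    rewrite bscal_addr, bscal_mul. auto.
  + intros x y [d1 [t1 [Hd1 ->]]] [d2 [t2 [Hd2 ->]]].
    rewrite b_add4, <- bscal_addl, !Key, Hga by auto. ring.
  + intros a x [d [t [Hd ->]]]. rewrite bscal_addr, bscal_mul, !Key, Hgs by auto. ring.
  + intros x [d [t [Hd ->]]]. rewrite Key by auto.
    destruct (Rtotal_order t 0) as [Ht|[Ht|Ht]].
    * set (s := - t).
      assert (Hss : 0 < s) by (unfold s; lra).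
      specialize (Hc1 (bscal X (/s) d) (Hs _ _ Hd)).
      rewrite Hgs in Hc1 by auto.
      assert (E : badd X d (bscal X t z) =
                  bscal X s (badd X (bscal X (/ s) d) (bscal X (-1) z))).
      { rewrite bscal_addr, !bscal_mul. replace (s * / s) with 1 by (field; lra).
        rewrite bscal_1. f_equal. f_equal. unfold s; ring. }
      rewrite E, Hps, Rabs_right by lra.
      assert (s * (/ s * g d - p (badd X (bscal X (/ s) d) (bscal X (-1) z))) <= s * c)
        by (apply Rmult_le_compat_l; lra).
      replace (s * (/ s * g d - p (badd X (bscal X (/ s) d) (bscal X (-1) z)))) with
        (g d - s * p (badd X (bscal X (/ s) d) (bscal X (-1) z))) in H by (field; lra).
      unfold s in *. lra.
    * subst t. rewrite b_scal0, badd_0. rewrite Rmult_0_l, Rplus_0_r. auto.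
    * specialize (Hc2 (bscal X (/t) d) (Hs _ _ Hd)).
      rewrite Hgs in Hc2 by auto.
      assert (E : badd X d (bscal X t z) = bscal X t (badd X (bscal X (/ t) d) z)).
      { rewrite bscal_addr, !bscal_mul. replace (t * / t) with 1 by (field; lra).
        rewrite bscal_1. auto. }
      rewrite E, Hps, Rabs_right by lra.
      assert (t * c <= t * (p (badd X (bscal X (/ t) d) z) - / t * g d))
        by (apply Rmult_le_compat_l; lra).
      replace (t * (p (badd X (bscal X (/ t) d) z) - / t * g d)) with
        (t * p (badd X (bscal X (/ t) d) z) - g d) in H by (field; lra).
      lra.
- intros x Hx. split.
  + exists x, 0. split; auto. rewrite b_scal0, badd_0; auto.
  + rewrite <- (badd_0 X x) at 1. rewrite <- (b_scal0 X z). rewrite Key by auto. ring.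
- exists (bzero X), 1. split; auto. rewrite bscal_1, b_0add; auto.
- replace z with (badd X (bzero X) (bscal X 1 z)) at 1 by (rewrite bscal_1, b_0add; auto).
  rewrite Key by auto.
  rewrite Hg0. ring.
Qed.

Lemma zorn_prop (T : Type) (t0 : T) (R : T -> T -> Prop) :
  (forall t, R t t) -> (forall r s t, R r s -> R s t -> R r t) ->
  (forall A : T -> Prop, (forall s t, A s -> A t -> R s t \/ R t s) ->
     exists t, forall s, A s -> R s t) ->
  exists t, forall s, R t s -> R s t.
Proof.
intros Hr Ht Hc.
destruct (@classical_sets.ZL_preorder T t0 (fun a b => boolp.asbool (R a b))) as [t Ht0].
- intro t. apply boolp.asboolT. auto.
- intros r s t H1 H2. apply boolp.asboolT. apply boolp.asboolW in H1. apply boolp.asboolW in H2. eauto.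
- intros A HA. destruct (Hc A) as [t Htt].
  + intros s t Hs Htt. destruct (HA s t Hs Htt) as [H|H]; [left|right]; apply boolp.asboolW; exact H.
  + exists t. intros s Hs. apply boolp.asboolT. auto.
- exists t. intros s Hs. apply boolp.asboolW. apply Ht0. apply boolp.asboolT. exact Hs.
Qed.

Lemma sublin_ge0 (X : Banach) p x : sublin X p -> 0 <= p x.
Proof.
intros Hp. assert (H0 := sublin_p0 X p Hp). destruct Hp as [Ha Hs].
assert (H := Ha x (bscal X (-1) x)). rewrite b_subv, Hs, Rabs_m1, H0 in H. lra.
Qed.

Lemma ext_refl (X : Banach) D (g : X -> R) : extends X D g D g.
Proof. intros x Hx; auto. Qed.

Lemma ext_trans (X : Banach) D1 (g1 : X -> R) D2 g2 D3 g3 :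
  extends X D1 g1 D2 g2 -> extends X D2 g2 D3 g3 -> extends X D1 g1 D3 g3.
Proof.
intros H1 H2 x Hx. destruct (H1 x Hx) as [A B]. destruct (H2 x A) as [C E]. split; auto. congruence.
Qed.

Lemma sep_ineq (X : Banach) p D g z d d' : sublin X p -> goodL X p D g -> D d -> D d' ->
  g d - p (badd X d (bscal X (-1) z)) <= p (badd X d' z) - g d'.
Proof.
intros [Hpa Hps] [H0 [Ha [Hs [Hga [Hgs Hgp]]]]] Hd Hd'.
assert (E : badd X d d' = badd X (badd X d (bscal X (-1) z)) (badd X d' z)).
{ rewrite b_add4, b_neg_add, badd_0. auto. }
assert (H1 := Hgp _ (Ha _ _ Hd Hd')). rewrite Hga in H1 by auto.
rewrite E in H1. assert (H2 := Hpa (badd X d (bscal X (-1) z)) (badd X d' z)). lra.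
Qed.

Theorem hahn_banach (X : Banach) (p : X -> R) (x0 : X) : sublin X p ->
  exists phi : X -> R,
    (forall x y, phi (badd X x y) = phi x + phi y) /\
    (forall a x, phi (bscal X a x) = a * phi x) /\
    (forall x, phi x <= p x) /\ phi x0 = p x0.
Proof.
intros Hp.
assert (Hp0 := sublin_p0 X p Hp).
destruct (classic (x0 = bzero X)) as [Hx0|Hx0].
{ exists (fun _ => 0). split; [|split; [|split]]; intros; try ring.
  - apply sublin_ge0; auto.
  - rewrite Hx0, Hp0; auto. }
assert (HG0 : goodL X p (fun x => x = bzero X) (fun _ => 0)).
{ split; [|split; [|split; [|split; [|split]]]]; intros; subst.
  - auto.
  - apply badd_0.
  - apply b_scal_zero.
  - ring.
  - ring.
  - rewrite Hp0; lra. }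
destruct (extend_one X p _ _ x0 (p x0) Hp HG0 Hx0) as [D1 [g1 [HG1 [_ [HD1 Hg1]]]]].
{ intros d ->. rewrite b_0add. rewrite (proj2 Hp), Rabs_m1.
  assert (0 <= p x0) by (apply sublin_ge0; auto). lra. }
{ intros d ->. rewrite b_0add. lra. }
pose (T := {e : (X -> Prop) * (X -> R) | goodL X p (fst e) (snd e) /\ extends X D1 g1 (fst e) (snd e)}).
pose (Rel := fun e f : T => extends X (fst (proj1_sig e)) (snd (proj1_sig e))
                                   (fst (proj1_sig f)) (snd (proj1_sig f))).
assert (Hgt0 : goodL X p (fst (D1, g1)) (snd (D1, g1)) /\ extends X D1 g1 (fst (D1, g1)) (snd (D1, g1))).
{ simpl. split; auto. apply ext_refl. }
pose (t0 := exist _ (D1, g1) Hgt0 : T).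
destruct (zorn_prop T t0 Rel) as [t Ht].
- intro t. apply ext_refl.
- intros r s t. apply ext_trans.
- intros A HA.
  destruct (classic (exists e, A e)) as [[e0 He0]|Hne].
  2:{ exists t0. intros s Hs. exfalso. apply Hne; eauto. }
  pose (Dc := fun x => exists e : T, A e /\ fst (proj1_sig e) x).
  pose (ch := fun x => epsilon (inhabits t0) (fun e : T => A e /\ fst (proj1_sig e) x)).
  pose (gc := fun x => snd (proj1_sig (ch x)) x).
  assert (Hgc : forall e x, A e -> fst (proj1_sig e) x -> gc x = snd (proj1_sig e) x).
  { intros e x He Hx. unfold gc.
    assert (Hs : A (ch x) /\ fst (proj1_sig (ch x)) x).
    { unfold ch. apply epsilon_spec. exists e; auto. }
    destruct Hs as [Hs1 Hs2]. destruct (HA e (ch x) He Hs1) as [H|H].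
    - apply (H x Hx).
    - symmetry. apply (H x Hs2). }
  assert (Two : forall e1 e2, A e1 -> A e2 -> exists e, A e /\ Rel e1 e /\ Rel e2 e).
  { intros e1 e2 H1 H2. destruct (HA e1 e2 H1 H2) as [H|H].
    - exists e2. split; auto. split; auto. apply ext_refl.
    - exists e1. split; auto. split; auto. apply ext_refl. }
  assert (HGc : goodL X p Dc gc).
  { destruct (proj2_sig e0) as [[Z0 _] _].
    split; [|split; [|split; [|split; [|split]]]].
    - exists e0. split; auto.
    - intros x y [e1 [He1 Hx]] [e2 [He2 Hy]]. destruct (Two e1 e2 He1 He2) as [e [He [R1 R2]]].
      destruct (proj2_sig e) as [[_ [Ha _]] _].
      exists e. split; auto. apply Ha; [apply (R1 x Hx)|apply (R2 y Hy)].
    - intros a x [e [He Hx]]. destruct (proj2_sig e) as [[_ [_ [Hs _]]] _].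
      exists e. split; auto.
    - intros x y [e1 [He1 Hx]] [e2 [He2 Hy]]. destruct (Two e1 e2 He1 He2) as [e [He [R1 R2]]].
      destruct (proj2_sig e) as [[_ [Ha [_ [Hga _]]]] _].
      destruct (R1 x Hx) as [Hx' _]. destruct (R2 y Hy) as [Hy' _].
      rewrite !(Hgc e) by auto. apply Hga; auto.
    - intros a x [e [He Hx]]. destruct (proj2_sig e) as [[_ [_ [Hs [_ [Hgs _]]]]] _].
      rewrite !(Hgc e) by auto. apply Hgs; auto.
    - intros x [e [He Hx]]. destruct (proj2_sig e) as [[_ [_ [_ [_ [_ Hgp]]]]] _].
      rewrite (Hgc e) by auto. apply Hgp; auto. }
  assert (HEc : extends X D1 g1 Dc gc).
  { intros x Hx. destruct (proj2_sig e0) as [_ He]. destruct (He x Hx) as [A1 A2].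
    split. exists e0; auto. rewrite (Hgc e0) by auto. auto. }
  exists (exist _ (Dc, gc) (conj HGc HEc) : T).
  intros s Hs x Hx. simpl. split.
  + exists s; auto.
  + apply Hgc; auto.
- destruct t as [[Dt gt] [HGt HEt]]. simpl in *.
  assert (Hall : forall z, Dt z).
  { intro z. apply NNPP. intro Hz.
    pose (E := fun r => exists d, Dt d /\ r = gt d - p (badd X d (bscal X (-1) z))).
    assert (HD0 : Dt (bzero X)) by (destruct HGt; auto).
    destruct (completeness E) as [m [Hm1 Hm2]].
    + exists (p (badd X (bzero X) z) - gt (bzero X)). intros r [d [Hd ->]].
      apply (sep_ineq X p Dt gt); auto.
    + exists (gt (bzero X) - p (badd X (bzero X) (bscal X (-1) z))). exists (bzero X); auto.
    + destruct (extend_one X p Dt gt z m Hp HGt Hz) as [D' [g' [HG' [HE' [HD' _]]]]].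
      * intros d Hd. apply Hm1. exists d; auto.
      * intros d Hd. apply Hm2. intros r [d' [Hd' ->]]. apply (sep_ineq X p Dt gt); auto.
      * assert (HE'' : extends X D1 g1 D' g') by (eapply ext_trans; eauto).
        pose (s := exist _ (D', g') (conj HG' HE'') : T).
        assert (Hr := Ht s HE'). unfold Rel in Hr. simpl in Hr.
        apply Hz. apply (Hr z HD'). }
  pose proof HGt as HGt2. destruct HGt2 as [_ [_ [_ [Hga [Hgs Hgp]]]]].
  exists gt. split; [|split; [|split]].
  + intros; apply Hga; auto.
  + intros; apply Hgs; auto.
  + intros; apply Hgp; auto.
  + destruct (HEt x0 HD1) as [_ ->]. auto.
Qed.

Definition seminormR (N : (nat -> R) -> R) : Prop :=
  (forall c d, N (fun i => c i + d i) <= N c + N d) /\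
  (forall a c, N (fun i => a * c i) = Rabs a * N c).

Definition depn (n : nat) (N : (nat -> R) -> R) : Prop :=
  forall c d, (forall i, (i < n)%nat -> c i = d i) -> N c = N d.

Definition si (v : nat -> R) (t : R) : nat -> R :=
  fun i => match i with O => t | S j => v j end.

Lemma N_ext (N : (nat -> R) -> R) (c d : nat -> R) : (forall i, c i = d i) -> N c = N d.
Proof. intro H. f_equal. apply functional_extensionality; auto. Qed.

Lemma N_zero (N : (nat -> R) -> R) : seminormR N -> N (fun _ => 0) = 0.
Proof.
intros [_ Hs]. rewrite (N_ext N (fun _ => 0) (fun i => 0 * 0)) by (intros; ring).
rewrite (Hs 0 (fun _ => 0)), Rabs_R0. ring.
Qed.

Lemma N_ge0 (N : (nat -> R) -> R) c : seminormR N -> 0 <= N c.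
Proof.
intros HN. assert (H0 := N_zero N HN). destruct HN as [Ha Hs].
assert (H := Ha c (fun i => (-1) * c i)). cbv beta in H.
rewrite (N_ext N (fun i => c i + -1 * c i) (fun _ => 0)) in H by (intros; ring).
rewrite Hs in H. replace (Rabs (-1)) with 1 in H by (unfold Rabs; destruct Rcase_abs; lra). lra.
Qed.

Lemma N_tri3 (N : (nat -> R) -> R) (c d e : nat -> R) : seminormR N ->
  N (fun i => c i - e i) <= N (fun i => c i - d i) + N (fun i => d i - e i).
Proof.
intros [Ha _]. rewrite (N_ext N (fun i => c i - e i) (fun i => (c i - d i) + (d i - e i))) by (intros; ring).
apply Ha.
Qed.

Lemma N_sym (N : (nat -> R) -> R) (c d : nat -> R) : seminormR N -> N (fun i => c i - d i) = N (fun i => d i - c i).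
Proof.
intros [_ Hs]. rewrite (N_ext N (fun i => c i - d i) (fun i => (-1) * (d i - c i))) by (intros; ring).
rewrite Hs. replace (Rabs (-1)) with 1 by (unfold Rabs; destruct Rcase_abs; lra). ring.
Qed.

Lemma grid (A h : R) : 0 < h -> 0 <= A ->
  exists ts, forall t, Rabs t <= A -> exists t', In t' ts /\ Rabs (t - t') <= h.
Proof.
intros Hh HA. destruct (INR_archimed h (2 * A)) as [M HM]; [lra|].
assert (G : forall m, forall t, -A <= t <= -A + INR m * h ->
          exists j, (j <= m)%nat /\ Rabs (t - (-A + INR j * h)) <= h).
{ induction m as [|m IH]; intros t Ht.
  - exists O. split; [lia|]. simpl in *. rewrite Rmult_0_l in *. unfold Rabs; destruct Rcase_abs; lra.
  - destruct (Rle_dec t (-A + INR m * h)) as [Hle|Hle].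
    + destruct (IH t (conj (proj1 Ht) Hle)) as [j [Hj Hj']]. exists j; split; auto.
    + exists (S m). split; auto. rewrite S_INR in *. unfold Rabs; destruct Rcase_abs; nra. }
exists (map (fun j => -A + INR j * h) (seq 0 (S M))).
intros t Ht. destruct (G M t) as [j [Hj Hj']].
- unfold Rabs in Ht; destruct Rcase_abs in Ht; lra.
- exists (-A + INR j * h). split; auto. apply (in_map (fun j => -A + INR j * h)). apply in_seq. lia.
Qed.

Lemma TB (n : nat) : forall N, seminormR N -> depn n N ->
  forall R0 delta, 0 < delta ->
  exists L : list (nat -> R), forall c, N c <= R0 ->
    exists d, In d L /\ N (fun i => c i - d i) <= delta.
Proof.
induction n as [|n IH]; intros N HN Hd R0 delta Hdel.
- exists ((fun _ => 0) :: nil). intros c Hc. exists (fun _ => 0). split; [left; auto|].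
  rewrite (Hd _ (fun _ => 0)) by (intros; lia). rewrite N_zero; auto. lra.
- set (N' := fun v => N (si v 0)).
  assert (HN' : seminormR N').
  { destruct HN as [Ha Hs]. split.
    - intros c d. unfold N'. rewrite (N_ext N (si (fun i => c i + d i) 0) (fun i => si c 0 i + si d 0 i))
        by (intros [|i]; simpl; ring). apply Ha.
    - intros a c. unfold N'. rewrite (N_ext N (si (fun i => a * c i) 0) (fun i => a * si c 0 i))
        by (intros [|i]; simpl; ring). apply Hs. }
  assert (Hd' : depn n N').
  { intros c d Hcd. unfold N'. apply Hd. intros [|i] Hi; simpl; auto. apply Hcd. lia. }
  assert (Hc_split : forall c, N c = N (si (fun j => c (S j)) (c O))).
  { intro c. apply N_ext. intros [|i]; simpl; auto. }
  set (e0 := si (fun _ => 0) 1).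
  set (K := N e0).
  assert (HK : 0 <= K) by (apply N_ge0; auto).
  destruct (classic (exists d0, 0 < d0 /\ forall v, d0 <= N (si v 1))) as [[d0 [Hd0 Hv]]|HB].
  + set (A := Rabs R0 / d0).
    assert (HA : 0 <= A) by (unfold A; unfold Rdiv; apply Rmult_le_pos; [apply Rabs_pos|left; apply Rinv_0_lt_compat; lra]).
    destruct (IH N' HN' Hd' (Rabs R0 + A * K) (delta / 2)) as [L' HL']; [lra|].
    destruct (grid A (delta / (2 * (K + 1))) ) as [ts Hts]; auto.
    { apply Rdiv_lt_0_compat; lra. }
    exists (flat_map (fun t => map (fun d' => si d' t) L') ts).
    intros c Hc.
    set (t := c O). set (v := fun j => c (S j)).
    assert (Ht : Rabs t <= A).
    { destruct (Req_dec t 0) as [Ht0|Ht0].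
      - rewrite Ht0, Rabs_R0; auto.
      - assert (E : N c = Rabs t * N (si (fun j => v j / t) 1)).
        { destruct HN as [_ Hs]. rewrite <- Hs. apply N_ext. intros [|i]; unfold v, t; simpl.
          - ring.
          - field. auto. }
        assert (H1 := Hv (fun j => v j / t)).
        assert (H2 : Rabs t * d0 <= Rabs R0).
        { assert (R0 <= Rabs R0) by apply Rle_abs. assert (0 <= Rabs t) by apply Rabs_pos. nra. }
        unfold A. apply (Rmult_le_reg_r d0); auto. unfold Rdiv. rewrite Rmult_assoc, Rinv_l by lra. lra. }
    assert (Hv' : N' v <= Rabs R0 + A * K).
    { unfold N'. destruct HN as [Ha Hs].
      rewrite (N_ext N (si v 0) (fun i => c i + (- t) * e0 i)) by (intros [|i]; unfold e0, v, t; simpl; ring).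
      eapply Rle_trans; [apply Ha|]. rewrite Hs. fold K. rewrite Rabs_Ropp.
      assert (R0 <= Rabs R0) by apply Rle_abs. assert (0 <= Rabs t) by apply Rabs_pos. nra. }
    destruct (HL' v Hv') as [d' [Hd'1 Hd'2]].
    destruct (Hts t Ht) as [t' [Ht'1 Ht'2]].
    exists (si d' t'). split.
    * apply in_flat_map. exists t'. split; auto. apply (in_map (fun d' => si d' t')). auto.
    * destruct HN as [Ha Hs].
      rewrite (N_ext N (fun i => c i - si d' t' i) (fun i => si (fun j => v j - d' j) 0 i + (t - t') * e0 i))
        by (intros [|i]; unfold e0, v, t; simpl; ring).
      eapply Rle_trans; [apply Ha|]. rewrite Hs. fold K. fold (N' (fun j => v j - d' j)).
      assert (Rabs (t - t') * K <= delta / (2 * (K + 1)) * K) by (apply Rmult_le_compat_r; auto).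
      assert (delta / (2 * (K + 1)) * K <= delta / 2).
      { unfold Rdiv. rewrite Rinv_mult. 
        assert (0 < / (K + 1)) by (apply Rinv_0_lt_compat; lra).
        assert (/ (K + 1) * K <= 1).
        { apply (Rmult_le_reg_l (K + 1)); [lra|]. rewrite <- Rmult_assoc, Rinv_r by lra. lra. }
        assert (0 < / 2) by lra. nra. }
      lra.
  + assert (HB' : forall d0, 0 < d0 -> exists v, N (si v 1) < d0).
    { intros d0 Hd0. apply NNPP. intro Hn. apply HB. exists d0. split; auto.
      intro v. apply Rnot_lt_le. intro Hl. apply Hn. exists v; auto. }
    destruct (IH N' HN' Hd' (Rabs R0 + delta) (delta / 2)) as [L' HL']; [lra|].
    exists (map (fun d' => si d' 0) L').
    intros c Hc.
    set (t := c O). set (v := fun j => c (S j)).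
    destruct (HB' (delta / (2 * (Rabs t + 1)))) as [v0 Hv0].
    { apply Rdiv_lt_0_compat; [lra|]. assert (0 <= Rabs t) by apply Rabs_pos. lra. }
    set (w := si (fun j => v j - t * v0 j) 0).
    assert (Hcw : N (fun i => c i - w i) <= delta / 2).
    { destruct HN as [Ha Hs] eqn:E.
      rewrite (N_ext N (fun i => c i - w i) (fun i => t * si v0 1 i))
        by (intros [|i]; unfold w, v, t; simpl; ring).
      rewrite Hs. assert (H0 : 0 <= N (si v0 1)) by (apply N_ge0; auto).
      assert (0 <= Rabs t) by apply Rabs_pos.
      assert (Rabs t * N (si v0 1) <= Rabs t * (delta / (2 * (Rabs t + 1))))
        by (apply Rmult_le_compat_l; lra).
      assert (Rabs t * (delta / (2 * (Rabs t + 1))) <= delta / 2).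
      { replace (Rabs t * (delta / (2 * (Rabs t + 1)))) with (delta / 2 * (Rabs t / (Rabs t + 1)))
          by (field; lra).
        assert (Rabs t / (Rabs t + 1) <= 1).
        { apply (Rmult_le_reg_r (Rabs t + 1)); [lra|]. unfold Rdiv.
          rewrite Rmult_assoc, Rinv_l by lra. lra. }
        nra. }
      lra. }
    assert (Hw : N' (fun j => v j - t * v0 j) <= Rabs R0 + delta).
    { unfold N'. fold w.
      assert (H1 := N_tri3 N w c (fun _ => 0) HN). cbv beta in H1.
      rewrite (N_ext N (fun i => w i - 0) w) in H1 by (intros; ring).
      rewrite (N_ext N (fun i => c i - 0) c) in H1 by (intros; ring).
      rewrite N_sym in H1 by auto.
      assert (R0 <= Rabs R0) by apply Rle_abs. lra. }
    destruct (HL' _ Hw) as [d' [Hd'1 Hd'2]].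
    exists (si d' 0). split.
    * apply (in_map (fun d' => si d' 0)). auto.
    * eapply Rle_trans; [apply (N_tri3 N c w); auto|].
      assert (N (fun i => w i - si d' 0 i) <= delta / 2).
      { eapply Rle_trans; [|apply Hd'2]. unfold N'. right. apply N_ext.
        intros [|i]; unfold w; simpl; ring. }
      lra.
Qed.

Fixpoint opsum (X Y : Banach) (es : list (X -> Y)) (c : nat -> R) : X -> Y :=
  match es with
  | nil => op_zero X Y
  | T :: es' => op_add X Y (op_scal X Y (c O) T) (opsum X Y es' (fun i => c (S i)))
  end.

Lemma opsum_blop (X Y : Banach) es c : Forall (is_blop X Y) es -> is_blop X Y (opsum X Y es c).
Proof.
intro H. revert c. induction H as [|T es HT Hes IH]; intro c; simpl.
- apply blop_zero.
- apply blop_add; auto. apply blop_scal; auto.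
Qed.

Lemma opsum_H (X Y : Banach) (H : (X -> Y) -> Prop) es c : closed_subspace_L X Y H -> Forall H es ->
  H (opsum X Y es c).
Proof.
intros [_ [Hz [Ha [Hs _]]]] Hf. revert c. induction Hf as [|T es HT Hes IH]; intro c; simpl; auto.
Qed.

Lemma opsum_add (X Y : Banach) es c d x :
  opsum X Y es (fun i => c i + d i) x = badd Y (opsum X Y es c x) (opsum X Y es d x).
Proof.
revert c d. induction es as [|T es IH]; intros c d; simpl.
- unfold op_zero. rewrite badd_0; auto.
- unfold op_add, op_scal. rewrite IH, bscal_addl. apply b_add4.
Qed.

Lemma opsum_scal (X Y : Banach) es a c x :
  opsum X Y es (fun i => a * c i) x = bscal Y a (opsum X Y es c x).
Proof.
revert c. induction es as [|T es IH]; intros c; simpl.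
- unfold op_zero. rewrite b_scal_zero; auto.
- unfold op_add, op_scal. rewrite IH, bscal_addr, bscal_mul. auto.
Qed.

Lemma opsum_dep (X Y : Banach) es c d x : (forall i, (i < length es)%nat -> c i = d i) ->
  opsum X Y es c x = opsum X Y es d x.
Proof.
revert c d. induction es as [|T es IH]; intros c d Hcd; simpl; auto.
unfold op_add, op_scal. rewrite (Hcd O) by (simpl; lia). f_equal. apply IH.
intros i Hi. apply Hcd. simpl; lia.
Qed.

Lemma lincomb_opsum (X Y : Banach) cs es x : length cs = length es ->
  lincomb (op_zero X Y) (op_add X Y) (op_scal X Y) cs es x = opsum X Y es (fun i => nth i cs 0) x.
Proof.
revert es. induction cs as [|a cs IH]; intros [|T es] Hl; simpl in *; try discriminate; auto.
unfold op_add, op_scal. f_equal. apply IH. lia.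
Qed.

Definition Ncoef (X Y : Banach) (es : list (X -> Y)) : (nat -> R) -> R := fun c => opnorm X Y (opsum X Y es c).

Lemma Ncoef_semi (X Y : Banach) es : Forall (is_blop X Y) es -> seminormR (Ncoef X Y es).
Proof.
intro Hb. split.
- intros c d. unfold Ncoef.
  rewrite (opnorm_ext X Y _ (op_add X Y (opsum X Y es c) (opsum X Y es d))).
  + apply op_tri; apply opsum_blop; auto.
  + intro x. apply opsum_add.
- intros a c. unfold Ncoef.
  rewrite (opnorm_ext X Y _ (op_scal X Y a (opsum X Y es c))).
  + apply op_scal_eq; apply opsum_blop; auto.
  + intro x. apply opsum_scal.
Qed.

Lemma Ncoef_dep (X Y : Banach) es : depn (length es) (Ncoef X Y es).
Proof.
intros c d Hcd. unfold Ncoef. apply opnorm_ext. intro x. apply opsum_dep; auto.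
Qed.

Fixpoint cl {A : Type} (es : list A) (c : nat -> R) : list R :=
  match es with nil => nil | _ :: es' => c O :: cl es' (fun i => c (S i)) end.

Lemma cl_length {A} (es : list A) c : length (cl es c) = length es.
Proof. revert c; induction es; intros; simpl; auto. Qed.

Lemma opsum_lincomb (X Y : Banach) es c u :
  opsum X Y es c u = lincomb (bzero Y) (badd Y) (bscal Y) (cl es c) (map (fun T => T u) es).
Proof.
revert c. induction es as [|T es IH]; intro c; simpl; auto.
unfold op_add, op_scal. rewrite IH. auto.
Qed.

Lemma opsum_in_span (X Y : Banach) es c u :
  in_span (bzero Y) (badd Y) (bscal Y) (map (fun T => T u) es) (opsum X Y es c u).
Proof.
exists (cl es c). split.
- rewrite cl_length, map_length. auto.
- apply opsum_lincomb.
Qed.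

Lemma lincomb_zeros {V : Type} (zero : V) add scal l :
  (forall e x, add (scal 0 e) x = x) ->
  lincomb zero add scal (repeat 0 (length l)) l = zero.
Proof.
intro H0. induction l as [|a l IH]; simpl; auto. rewrite IH. apply H0.
Qed.

Lemma in_span_cons {V : Type} (zero : V) add scal l a v :
  (forall e x, add (scal 0 e) x = x) ->
  in_span zero add scal l v -> in_span zero add scal (a :: l) v.
Proof.
intros H0 [cs [Hl ->]]. exists (0 :: cs). split; simpl; auto.
Qed.

Lemma in_span_In {V : Type} (zero : V) add scal l v :
  (forall e x, add (scal 0 e) x = x) -> (forall e, add (scal 1 e) zero = e) ->
  In v l -> in_span zero add scal l v.
Proof.
intros H0 H1 Hin. induction l as [|a l IH]; [destruct Hin|].
destruct Hin as [->|Hin].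
- exists (1 :: repeat 0 (length l)). split.
  + simpl. rewrite repeat_length. auto.
  + simpl. rewrite lincomb_zeros by auto. auto.
- apply in_span_cons; auto.
Qed.

Lemma in_span_app_r {V : Type} (zero : V) add scal l l3 v :
  (forall e x, add (scal 0 e) x = x) ->
  in_span zero add scal l v -> in_span zero add scal (l ++ l3) v.
Proof.
intros H0 [cs [Hl ->]]. exists (cs ++ repeat 0 (length l3)). split.
- rewrite !app_length, repeat_length. lia.
- revert l Hl. induction cs as [|c cs IH]; intros [|a l] Hl; simpl in *; try discriminate.
  + rewrite lincomb_zeros; auto.
  + f_equal. apply IH. lia.
Qed.

Lemma in_span_app_l {V : Type} (zero : V) add scal l1 l v :
  (forall e x, add (scal 0 e) x = x) ->
  in_span zero add scal l v -> in_span zero add scal (l1 ++ l) v.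
Proof.
intros H0 H. induction l1 as [|a l1 IH]; simpl; auto. apply in_span_cons; auto.
Qed.

Lemma in_span_flat_map {V A : Type} (zero : V) add scal (f : A -> list V) (L : list A) a v :
  (forall e x, add (scal 0 e) x = x) ->
  In a L -> in_span zero add scal (f a) v -> in_span zero add scal (flat_map f L) v.
Proof.
intros H0 Hin Hs. destruct (in_split a L Hin) as [l1 [l2 ->]].
rewrite flat_map_app. simpl. apply in_span_app_l; auto. apply in_span_app_r; auto.
Qed.

Lemma blfun_comb (X : Banach) f g lam : is_blfun X f -> is_blfun X g ->
  is_blfun X (fun z => f z + lam * g z).
Proof.
intros [fa [fs [M HM]]] [ga [gs [N HN]]]. split; [|split].
- intros x y. rewrite fa, ga. ring.
- intros a x. rewrite fs, gs. ring.
- exists (Rabs M + Rabs lam * Rabs N). intro x.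
  eapply Rle_trans; [apply Rabs_triang|]. rewrite Rabs_mult.
  specialize (HM x); specialize (HN x). assert (H0 := b_norm_ge0 X x).
  assert (M <= Rabs M) by apply Rle_abs. assert (N <= Rabs N) by apply Rle_abs.
  assert (0 <= Rabs lam) by apply Rabs_pos.
  assert (Rabs (g x) <= Rabs N * bnorm X x) by nra.
  assert (Rabs lam * Rabs (g x) <= Rabs lam * (Rabs N * bnorm X x)) by (apply Rmult_le_compat_l; auto).
  nra.
Qed.

Lemma phi_exists (X Y : Banach) (S : X -> Y) a : is_blop X Y S -> 0 < a ->
  exists phi : X -> R, is_blfun X phi /\ dualnorm X phi <= opnorm X Y S /\
     opnorm X Y S - a <= dualnorm X phi /\ (forall x, Rabs (phi x) <= bnorm Y (S x)).
Proof.
intros HS Ha.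
destruct (op_approx X Y S a HS Ha) as [x0 [Hx0 Hx0']].
assert (Hsub : sublin X (fun x => bnorm Y (S x))).
{ destruct HS as [Sa [Ss _]]. split.
  - intros x y. rewrite Sa. apply bnorm_triangle.
  - intros b x. rewrite Ss. apply bnorm_scal. }
destruct (hahn_banach X _ x0 Hsub) as [phi [pa [ps [pd px]]]].
assert (Habs : forall x, Rabs (phi x) <= bnorm Y (S x)).
{ intro x. unfold Rabs. destruct Rcase_abs.
  - assert (H := pd (bscal X (-1) x)). rewrite ps in H. destruct Hsub as [_ Hs].
    rewrite Hs, Rabs_m1 in H. lra.
  - apply pd. }
assert (Hbl : is_blfun X phi).
{ split; [|split]; auto. exists (opnorm X Y S). intro x. eapply Rle_trans; [apply Habs|].
  apply op_scale; auto. }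
exists phi. split; [|split; [|split]]; auto.
- apply dn_le. intros x Hx. eapply Rle_trans; [apply Habs|]. apply op_ub; auto.
- eapply Rle_trans; [|apply (dn_ub X phi x0); auto]. rewrite px.
  assert (0 <= bnorm Y (S x0)) by apply b_norm_ge0. rewrite Rabs_right; lra.
Qed.

Theorem mainTheorem8 (X Y : Banach) (H : (X -> Y) -> Prop) :
  dual_octahedral X -> octahedral Y ->
  closed_subspace_L X Y H -> contains_finite_rank X Y H ->
  octahedral_opspace X Y H.
Proof.
intros HXd HY HH HF es Hes eps Heps.
set (e0 := Rmin eps 1).
assert (He0 : 0 < e0 /\ e0 <= eps /\ e0 <= 1).
{ unfold e0. split; [apply Rmin_glb_lt; lra|]. split; [apply Rmin_l|apply Rmin_r]. }
set (a := e0 / 8).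
assert (Ha : 0 < a /\ a <= 1/8) by (unfold a; lra).
assert (Hb : Forall (is_blop X Y) es).
{ eapply Forall_impl; [|exact Hes]. intros T HT. destruct HH as [HH1 _]. auto. }
set (N := Ncoef X Y es).
assert (HN : seminormR N) by (apply Ncoef_semi; auto).
destruct (TB (length es) N HN (Ncoef_dep X Y es) 1 a (proj1 Ha)) as [L HL].
set (Pphi := fun d (phi : X -> R) => is_blfun X phi /\ dualnorm X phi <= N d /\
     N d - a <= dualnorm X phi /\ (forall x, Rabs (phi x) <= bnorm Y (opsum X Y es d x))).
set (phi := fun d => epsilon (inhabits (fun _ : X => 0)) (Pphi d)).
assert (Hphi : forall d, Pphi d (phi d)).
{ intro d. unfold phi. apply epsilon_spec. apply phi_exists; [apply opsum_blop; auto|apply Ha]. }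
destruct (HXd (map phi L)) with (eps := a) as [xs [Hxs1 [Hxs2 Hxs3]]].
{ apply Forall_forall. intros f Hf. apply in_map_iff in Hf. destruct Hf as [d [<- _]].
  apply (Hphi d). }
{ apply Ha. }
set (Pu := fun d (u : X) => In d L -> bnorm X u <= 1 /\
   (1 - a) * (dualnorm X (phi d) + 1) - a < Rabs (phi d u + 1 * xs u)).
set (uu := fun d => epsilon (inhabits (bzero X)) (Pu d)).
assert (Hu : forall d, Pu d (uu d)).
{ intro d. unfold uu. apply epsilon_spec.
  destruct (classic (In d L)) as [Hin|Hnin].
  2:{ exists (bzero X). intro; contradiction. }
  assert (Hbl : is_blfun X (fun z => phi d z + 1 * xs z)) by (apply blfun_comb; auto; apply (Hphi d)).
  destruct (dn_approx X _ a Hbl (proj1 Ha)) as [u [Hu1 Hu2]].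
  exists u. intros _. split; auto.
  assert (Hsp : in_span (fun _ : X => 0) (fun f g x => f x + g x) (fun a f x => a * f x)
                  (map phi L) (phi d)).
  { apply in_span_In.
    - intros e x. apply functional_extensionality; intro z. ring.
    - intros e. apply functional_extensionality; intro z. ring.
    - apply in_map; auto. }
  assert (H3 := Hxs3 (phi d) 1 Hsp). rewrite Rabs_R1 in H3. lra. }
destruct (HY (flat_map (fun d => map (fun T => T (uu d)) es) L)) with (eps := a)
  as [y [_ [Hy1 Hy2]]].
{ apply Forall_forall; auto. }
{ apply Ha. }
set (T0 := fun x => bscal Y (xs x) y).
exists T0. split; [|split].
{ apply HF. auto. }
{ assert (E : opnorm X Y T0 = dualnorm X xs).
  { unfold opnorm, dualnorm. f_equal. apply functional_extensionality. intro t.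
    apply propositional_extensionality. split; intros [x [Hx1 Hx2]]; exists x; split; auto;
      rewrite Hx2; unfold T0; rewrite bnorm_scal, Hy1; ring. }
  rewrite E; auto. }
intros S lam [cs [Hcs ->]].
set (c := fun i => nth i cs 0).
assert (ES : forall x, lincomb (op_zero X Y) (op_add X Y) (op_scal X Y) cs es x = opsum X Y es c x)
  by (intro x; apply lincomb_opsum; auto).
rewrite (opnorm_ext X Y (lincomb _ _ _ cs es) (opsum X Y es c)) by auto.
rewrite (opnorm_ext X Y (op_add X Y (lincomb _ _ _ cs es) (op_scal X Y lam T0))
                        (op_add X Y (opsum X Y es c) (op_scal X Y lam T0)))
  by (intro x; unfold op_add; rewrite ES; auto).
fold (N c).
assert (HT0 : is_blop X Y T0).
{ destruct HH as [HH1 _]. apply HH1. apply HF. auto. }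
assert (Hbig : is_blop X Y (op_add X Y (opsum X Y es c) (op_scal X Y lam T0))).
{ apply blop_add; [apply opsum_blop; auto|apply blop_scal; auto]. }
assert (Hs0 : 0 <= N c) by (apply N_ge0; auto).
assert (Hlam0 : 0 <= Rabs lam) by apply Rabs_pos.
assert (Hfin : forall m, (1 - e0) * (N c + Rabs lam) <= m -> m >= (1 - eps) * (N c + Rabs lam)).
{ intros m Hm. nra. }
apply Hfin.
destruct (Req_dec (N c) 0) as [Hs|Hs].
-
  destruct (dn_approx X xs a Hxs1 (proj1 Ha)) as [u0 [Hu01 Hu02]].
  eapply Rle_trans; [|apply (op_ub X Y _ u0 Hbig Hu01)].
  assert (HS0 : opsum X Y es c u0 = bzero Y).
  { apply bnorm_eq0. assert (H1 := op_scale X Y _ u0 (opsum_blop X Y es c Hb)).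
    fold (Ncoef X Y es c) in H1. fold N in H1. rewrite Hs in H1.
    assert (H2 := b_norm_ge0 Y (opsum X Y es c u0)). lra. }
  unfold op_add, op_scal, T0. rewrite HS0, b_0add, bscal_mul, bnorm_scal, Hy1, Rabs_mult, Hs.
  rewrite Hxs2 in Hu02.
  assert (1 - e0 <= Rabs (xs u0)) by (unfold a in *; lra).
  assert (Rabs lam * (1 - e0) <= Rabs lam * Rabs (xs u0)) by (apply Rmult_le_compat_l; lra).
  lra.
- assert (Hsp : 0 < N c) by lra.
  set (s := N c) in *.
  set (c' := fun i => / s * c i).
  assert (HNc' : N c' = 1).
  { unfold c'. pose proof HN as [_ Hsc]. rewrite Hsc, Rabs_right.
    - fold s. field. lra.
    - left. apply Rinv_0_lt_compat; auto. }
  destruct (HL c') as [d [HdL Hd]]; [lra|].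
  assert (HNd1 : 1 - a <= N d).
  { assert (H1 := N_tri3 N c' (fun _ => 0) d HN). cbv beta in H1.
    rewrite (N_ext N (fun i => c' i - 0) c') in H1 by (intros; ring).
    rewrite (N_ext N (fun i => 0 - d i) (fun i => (-1) * d i)) in H1 by (intros; ring).
    pose proof HN as [_ Hsc]. rewrite Hsc, Rabs_m1 in H1.
    assert (H2 := N_tri3 N c' d (fun _ => 0) HN).
    cbv beta in H2.
    rewrite (N_ext N (fun i => c' i - 0) c') in H2 by (intros; ring).
    rewrite (N_ext N (fun i => d i - 0) d) in H2 by (intros; ring).
    lra. }
  destruct (Hphi d) as [Hp1 [Hp2 [Hp3 Hp4]]].
  destruct (Hu d HdL) as [Hu1 Hu2].
  set (u := uu d) in *. set (f := phi d) in *.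
  assert (Hfu : Rabs (f u) <= dualnorm X f) by (apply dn_ub; auto).
  assert (Hxu : Rabs (xs u) <= 1) by (rewrite <- Hxs2; apply dn_ub; auto).
  assert (Htri : Rabs (f u + 1 * xs u) <= Rabs (f u) + Rabs (xs u)).
  { rewrite Rmult_1_l. apply Rabs_triang. }
  assert (HNd2 : N d <= 1 + a).
  { assert (H1 := N_tri3 N d c' (fun _ => 0) HN). cbv beta in H1.
    rewrite (N_ext N (fun i => d i - 0) d) in H1 by (intros; ring).
    rewrite (N_ext N (fun i => c' i - 0) c') in H1 by (intros; ring).
    rewrite N_sym in H1 by auto. lra. }
  assert (Hfn : 1 - 2 * a <= dualnorm X f <= 1 + a) by lra.
  assert (Hxs_u : 1 - 4 * a <= Rabs (xs u)) by nra.
  assert (Hf_u : 1 - 6 * a <= Rabs (f u)) by nra.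
  assert (HSd : 1 - 6 * a <= bnorm Y (opsum X Y es d u)).
  { eapply Rle_trans; [apply Hf_u|]. apply Hp4. }
  assert (Hdiff : bnorm Y (opsum X Y es (fun i => c' i - d i) u) <= a).
  { eapply Rle_trans; [apply (op_scale X Y _ u (opsum_blop X Y es _ Hb))|].
    fold (Ncoef X Y es (fun i => c' i - d i)). fold N.
    assert (0 <= N (fun i => c' i - d i)) by (apply N_ge0; auto).
    assert (0 <= bnorm X u) by apply b_norm_ge0. nra. }
  assert (HS'u : 1 - 7 * a <= bnorm Y (opsum X Y es c' u)).
  { assert (E : opsum X Y es c' u = badd Y (opsum X Y es d u) (opsum X Y es (fun i => c' i - d i) u)).
    { rewrite <- opsum_add. apply opsum_dep. intros; ring. }
    rewrite E. assert (H1 := b_rev_tri Y (opsum X Y es d u) (opsum X Y es (fun i => c' i - d i) u)).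
    assert (H2 := b_rev_tri Y (opsum X Y es (fun i => c' i - d i) u) (opsum X Y es d u)).
    unfold Rminus in *. lra. }
  set (mu := lam / s * xs u).
  assert (Hspan : in_span (bzero Y) (badd Y) (bscal Y)
          (flat_map (fun d => map (fun T => T (uu d)) es) L) (opsum X Y es c' u)).
  { apply (in_span_flat_map _ _ _ (fun d => map (fun T => T (uu d)) es) L d); auto.
    - intros e x. rewrite b_scal0, b_0add; auto.
    - apply opsum_in_span. }
  assert (HY2 := Hy2 _ mu Hspan).
  assert (Eq : (op_add X Y (opsum X Y es c) (op_scal X Y lam T0)) u =
               bscal Y s (badd Y (opsum X Y es c' u) (bscal Y mu y))).
  { unfold op_add, op_scal, T0. rewrite bscal_addr, !bscal_mul.
    unfold c'. rewrite opsum_scal, bscal_mul. replace (s * / s) with 1 by (field; lra).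
    rewrite bscal_1. f_equal. f_equal. unfold mu. field. lra. }
  eapply Rle_trans; [|apply (op_ub X Y _ u Hbig Hu1)].
  rewrite Eq, bnorm_scal, (Rabs_right s) by lra.
  assert (Hmu : Rabs mu = Rabs lam / s * Rabs (xs u)).
  { unfold mu. rewrite !Rabs_mult. unfold Rdiv. rewrite Rabs_mult, Rabs_inv, (Rabs_right s) by lra. ring. }
  assert (Hls : 0 <= Rabs lam / s) by (unfold Rdiv; apply Rmult_le_pos; [lra|left; apply Rinv_0_lt_compat; lra]).
  assert (K1 : (1 - 7 * a) * (1 + Rabs lam / s) <= bnorm Y (opsum X Y es c' u) + Rabs mu).
  { rewrite Hmu. assert (Rabs lam / s * (1 - 4 * a) <= Rabs lam / s * Rabs (xs u))
      by (apply Rmult_le_compat_l; lra). nra. }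
  assert (K2 : (1 - 8 * a) * (1 + Rabs lam / s) <= (1 - a) * (bnorm Y (opsum X Y es c' u) + Rabs mu)).
  { assert ((1 - a) * ((1 - 7 * a) * (1 + Rabs lam / s)) <=
            (1 - a) * (bnorm Y (opsum X Y es c' u) + Rabs mu)) by (apply Rmult_le_compat_l; lra).
    assert ((1 - 8 * a) * (1 + Rabs lam / s) <= (1 - a) * ((1 - 7 * a) * (1 + Rabs lam / s))) by nra.
    lra. }
  assert (K3 : (1 - e0) * (s + Rabs lam) = s * ((1 - 8 * a) * (1 + Rabs lam / s)))
    by (unfold a; field; lra).
  rewrite K3. apply Rmult_le_compat_l; lra.
Qed.
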